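(* Let $h>0$. The function $C_{\min}^{-1}h^{-d}\mathcal{F}_h$ is a self-concordant barrier for $\mathcal{Q}_h$ with parameter $\nu(h)=O(h^{-d})$.
   Context: $\Omega\subset\mathbb{R}^d$ bounded open domain; $Q=\{(q,s):s\ge\Lambda(q)\}$ with $\Lambda$ convex continuous; $F$ is a $\nu$-self-concordant barrier for $Q$, i.e. $|F'''(z)[u^3]|\le2(F''(z)[u^2])^{3/2}$ and $|F'(z)[u]|\le\sqrt\nu(F''(z)[u^2])^{1/2}$, and a self-concordant barrier with parameter $\mu$ means the same with $\nu$ replaced by $\mu$. $T_h$ is a quasi-uniform simplicial triangulation of $\Omega$ with quadrature $\int_\Omega^{(h)}\eta=\sum_{K\in T_h}\sum_{k=1}^\beta\omega_{K,k}\eta|_K(x_{K,k})$ with positive weights satisfying $C_{\min}h^d\le\omega_{K,k}\le C_{\max}h^d$ for constants $0<C_{\min}<1<C_{\max}$ independent of $h$. $V_h$ is a piecewise polynomial finite element space on $T_h$, $\mathcal{Q}_h=\{v\in V_h: v(x_{K,k})\in Q\ \text{for all }K\in T_h,\ k=1,\dots,\beta\}$ and $\mathcal{F}_h(w)=\int_\Omega^{(h)}F(w(x))$. The $O(\cdot)$ constant is independent of $h$. *)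

(* Defs.v *)
From HB Require Import structures.
From mathcomp Require Import all_boot all_order all_algebra.
From mathcomp Require Import all_classical all_reals all_analysis.
Set Implicit Arguments. Unset Strict Implicit. Unset Printing Implicit Defensive.
Import Order.TTheory GRing.Theory Num.Theory.
Import numFieldNormedType.Exports.
Local Open Scope classical_set_scope.
Local Open Scope ring_scope.

Section Defs.
Variable R : realType.

Definition line_restr n (F : 'rV[R]_n -> R) (z u : 'rV[R]_n) : R -> R :=
  fun t => F (z + t *: u).

(* Here F^(k)(z)[u^k] is the k-th derivative at t = 0 of t |-> F(z + t u). *)
Definition self_concordant_barrier n (S : set 'rV[R]_n) (F : 'rV[R]_n -> R)
    (nu : R) : Prop :=
  forall z u : 'rV[R]_n, interior S z ->
    let phi := line_restr F z u in
    [/\ derivable phi 0 1, derivable (derive1 phi) 0 1 & derivable (derive1n 2 phi) 0 1]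
    /\ [/\ 0 <= derive1n 2 phi 0,
        `|derive1n 3 phi 0| <= 2 * powR (derive1n 2 phi 0) (3%:R / 2%:R)
      & `|derive1 phi 0| <= Num.sqrt nu * Num.sqrt (derive1n 2 phi 0)].

Definition enorm d (x : 'rV[R]_d) : R := Num.sqrt (\sum_(i < d) x 0 i ^+ 2).

Definition ebounded d (A : set 'rV[R]_d) : Prop :=
  exists B : R, forall x, A x -> enorm x <= B.

Definition affinely_independent d (v : 'I_d.+1 -> 'rV[R]_d) : Prop :=
  \det (\matrix_(i < d, j < d) (v (lift ord0 i) 0 j - v ord0 0 j)) != 0.

Definition simplex_set d (v : 'I_d.+1 -> 'rV[R]_d) : set 'rV[R]_d :=
  [set x | exists l : 'I_d.+1 -> R,
     [/\ forall i, 0 <= l i, \sum_i l i = 1 & x = \sum_i l i *: v i]].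

Definition common_face d (v w : 'I_d.+1 -> 'rV[R]_d) : set 'rV[R]_d :=
  [set x | exists l : 'I_d.+1 -> R,
     [/\ forall i, 0 <= l i, \sum_i l i = 1,
         (forall i, l i != 0 -> exists j, w j = v i) & x = \sum_i l i *: v i]].

Definition is_triangulation d (Om : set 'rV[R]_d) M
    (T : 'I_M -> 'I_d.+1 -> 'rV[R]_d) : Prop :=
  [/\ forall K, affinely_independent (T K),
      [set x | exists K, simplex_set (T K) x] = closure Om,
      forall K L, K != L ->
        interior (simplex_set (T K)) `&` interior (simplex_set (T L)) = set0
    & forall K L, K != L ->
        simplex_set (T K) `&` simplex_set (T L) = common_face (T K) (T L)].

Definition quasi_uniform d M (rho h : R) (T : 'I_M -> 'I_d.+1 -> 'rV[R]_d) : Prop :=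
  forall K,
    (forall x y, simplex_set (T K) x -> simplex_set (T K) y -> enorm (x - y) <= h)
    /\ exists c, forall x, enorm (x - c) <= rho * h -> simplex_set (T K) x.

Definition poly_fun d (f : 'rV[R]_d -> R) : Prop :=
  exists s : seq (R * ('I_d -> nat)),
    forall x, f x = \sum_(a <- s) a.1 * \prod_(i < d) x 0 i ^+ a.2 i.

(* V_h is spanned by the linearly independent piecewise polynomial functions
   phi_1..phi_N; phi j K is the (vector valued) polynomial phi_j|_K. *)
Definition fe_eval d m M N (phi : 'I_N -> 'I_M -> 'rV[R]_d -> 'rV[R]_m)
    (c : 'rV[R]_N) (K : 'I_M) (x : 'rV[R]_d) : 'rV[R]_m :=
  \sum_(j < N) c 0 j *: phi j K x.

Definition fe_space d m M N (T : 'I_M -> 'I_d.+1 -> 'rV[R]_d)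
    (phi : 'I_N -> 'I_M -> 'rV[R]_d -> 'rV[R]_m) : Prop :=
  (forall j K (a : 'I_m), poly_fun (fun x => phi j K x 0 a))
  /\ (forall c : 'rV[R]_N,
        (forall K x, simplex_set (T K) x -> fe_eval phi c K x = 0) -> c = 0).

Definition convex_fun p (Lam : 'rV[R]_p -> R) : Prop :=
  forall (x y : 'rV[R]_p) (t : R), 0 <= t <= 1 ->
    Lam ((1 - t) *: x + t *: y) <= (1 - t) * Lam x + t * Lam y.

Definition epi_set p (Lam : 'rV[R]_p -> R) : set 'rV[R]_(p + 1) :=
  [set z | Lam (lsubmx z) <= rsubmx z 0 0].

(* Q_h, in the coordinates c of v = sum_j c_j phi_j *)
Definition Qh d m M N beta (Q : set 'rV[R]_m)
    (phi : 'I_N -> 'I_M -> 'rV[R]_d -> 'rV[R]_m)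
    (xq : 'I_M -> 'I_beta -> 'rV[R]_d) : set 'rV[R]_N :=
  [set c | forall K k, Q (fe_eval phi c K (xq K k))].

(* F_h(w) = int^(h) F(w(x)) *)
Definition Fh d m M N beta (F : 'rV[R]_m -> R)
    (phi : 'I_N -> 'I_M -> 'rV[R]_d -> 'rV[R]_m)
    (xq : 'I_M -> 'I_beta -> 'rV[R]_d) (om : 'I_M -> 'I_beta -> R)
    (c : 'rV[R]_N) : R :=
  \sum_(K < M) \sum_(k < beta) om K k * F (fe_eval phi c K (xq K k)).

End Defs.

(* Main.v *)
Require Import Defs.
From HB Require Import structures.
From mathcomp Require Import all_boot all_order all_algebra.
From mathcomp Require Import all_classical all_reals all_analysis.
Import Order.TTheory GRing.Theory Num.Theory.
Import numFieldNormedType.Exports.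
Local Open Scope classical_set_scope.
Local Open Scope ring_scope.
From mathcomp Require Import ring lra zify.
Section Der.
Variable R : realType.

Lemma derive1_shift (f : R -> R) t :
  derive1 (fun s => f (t + s)) = fun s => derive1 f (t + s).
Proof.
apply/funext => s; rewrite /derive1.
by under eq_fun do rewrite addrCA.
Qed.

Lemma derivable_shift (f : R -> R) t :
  derivable (fun s => f (t + s)) 0 1 -> derivable f t 1.
Proof.
rewrite /derivable; set g := (fun h : R => _).
set g' := (fun h : R => _); suff -> : g = g' by [].
apply/funext => h; rewrite /g /g' /=.
by rewrite !addr0 (addrC t).
Qed.

Lemma sum_fun_deriv {I : finType} (w : I -> R) (fs : I -> R -> R) t :
  (forall i, derivable (fs i) t 1) ->
  is_derive t 1 (fun s => \sum_i w i * fs i s) (\sum_i w i * derive1 (fs i) t).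
Proof.
move=> Hd.
have -> : (fun s => \sum_i w i * fs i s) = \sum_i (w i \*: fs i).
  by apply/funext => s; rewrite fct_sumE.
elim/big_rec2 : _ => [|i y1 y2 _ IH]; first exact: is_derive_cst.
apply: is_deriveD => //; rewrite derive1E.
apply: is_deriveZ; exact: derivableP.
Qed.

Lemma sum_deriv (O : set R) (I : finType) (w : I -> R) (fs : I -> R -> R) (G : R -> R) :
  open O -> (forall t, O t -> G t = \sum_i w i * fs i t) ->
  (forall i t, O t -> derivable (fs i) t 1) ->
  forall t, O t -> derivable G t 1 /\ derive1 G t = \sum_i w i * derive1 (fs i) t.
Proof.
move=> oO HG Hd t Ot.
have Hs := sum_fun_deriv w fs t (fun i => Hd i t Ot).
have nb : {near t, (fun s => \sum_i w i * fs i s) =1 G}.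
  have : nbhs t O by exact: open_nbhs_nbhs.
  by apply: filterS => s Os; rewrite HG.
split.
  apply: near_eq_derivable nb _; exact: (@ex_derive _ _ _ _ _ _ _ Hs).
rewrite derive1E -(near_eq_derive _ nb); exact: derive_val.
Qed.
End Der.
Section Ineq.
Variable R : realType.

Lemma pow32 (x : R) : 0 <= x -> powR x (3%:R / 2%:R) = x * Num.sqrt x.
Proof.
move=> x0.
have -> : (3%:R / 2%:R : R) = 1 + 2^-1 by field.
rewrite powRD; last by apply/implyP => /eqP; lra.
by rewrite powRr1 // powR12_sqrt.
Qed.

Lemma le_sum1 (I : finType) (F : I -> R) i : (forall j, 0 <= F j) -> F i <= \sum_j F j.
Proof. by move=> F0; rewrite (bigD1 i) //= lerDl sumr_ge0. Qed.

Lemma ineq2 (I : finType) (w x y : I -> R) :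
  (forall i, 1 <= w i) -> (forall i, 0 <= x i) ->
  (forall i, `|y i| <= 2 * powR (x i) (3%:R / 2%:R)) ->
  `|\sum_i w i * y i| <= 2 * powR (\sum_i w i * x i) (3%:R / 2%:R).
Proof.
move=> w1 x0 Hy.
have wx0 : forall i, 0 <= w i * x i by move=> i; apply: mulr_ge0 => //; apply: le_trans (w1 i).
set S := \sum_i w i * x i.
have S0 : 0 <= S by apply: sumr_ge0 => i _.
have xS : forall i, x i <= S.
  move=> i; apply: le_trans (@le_sum1 _ _ i wx0).
  by rewrite ler_peMl.
rewrite pow32 //.
apply: le_trans (ler_norm_sum _ _ _) _.
have -> : 2 * (S * Num.sqrt S) = \sum_i w i * (2 * (x i * Num.sqrt S)).
  have -> : 2 * (S * Num.sqrt S) = S * (2 * Num.sqrt S) by ring.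
  by rewrite {1}/S mulr_suml; apply: eq_bigr => i _; ring.
apply: ler_sum => i _.
rewrite normrM (ger0_norm (le_trans ler01 (w1 i))).
apply: ler_wpM2l; first exact: le_trans (w1 i).
apply: le_trans (Hy i) _; rewrite pow32 //.
apply: ler_wpM2l => //; apply: ler_wpM2l => //.
by rewrite ler_sqrt.
Qed.

Lemma ineq3 (I : finType) (w x e : I -> R) (nu : R) :
  (forall i, 1 <= w i) -> (forall i, 0 <= x i) ->
  (forall i, `|e i| <= Num.sqrt nu * Num.sqrt (x i)) ->
  `|\sum_i w i * e i| <= Num.sqrt nu * (Num.sqrt (\sum_i w i) * Num.sqrt (\sum_i w i * x i)).
Proof.
move=> w1 x0 He.
have w0 : forall i, 0 <= w i by move=> i; apply: le_trans (w1 i).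
set S := \sum_i w i * x i.
set W := \sum_i w i.
set T := \sum_i w i * Num.sqrt (x i).
have S0 : 0 <= S by apply: sumr_ge0 => i _; exact: mulr_ge0.
have W0 : 0 <= W by apply: sumr_ge0.
have T0 : 0 <= T by apply: sumr_ge0 => i _; exact: mulr_ge0.
have key : forall l, 0 < l -> 2 * l * T <= l ^+ 2 * W + S.
  move=> l l0; rewrite /T /W /S mulr_sumr mulr_sumr -big_split /=.
  apply: ler_sum => i _.
  have sq := sqr_sqrtr (x0 i).
  have sx := sqrtr_ge0 (x i).
  have := mulr_ge0 (w0 i) (sqr_ge0 (l - Num.sqrt (x i))).
  move: sq sx; set s := Num.sqrt (x i) => sq sx.
  rewrite -sq; have := w0 i; nra.
have TS : T ^+ 2 <= W * S.
  have [Wz|Wp] := eqVneq W 0.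
    have -> : T = 0.
      rewrite /T big1 // => i _.
      have := @le_sum1 _ _ i w0; rewrite -/W Wz => wle.
      have := w1 i; lra.
    rewrite Wz; lra.
  have Wp' : 0 < W by rewrite lt_def Wp W0.
  have [Tz|Tp] := eqVneq T 0; first by rewrite Tz expr0n /=; exact: mulr_ge0.
  have Tp' : 0 < T by rewrite lt_def Tp T0.
  have := key (T / W) (divr_gt0 Tp' Wp').
  have -> : 2 * (T / W) * T = 2 * T ^+ 2 / W by field; exact: Wp.
  have -> : (T / W) ^+ 2 * W = T ^+ 2 / W by field; exact: Wp.
  move=> H.
  have H2 : T ^+ 2 / W <= S by lra.
  by rewrite -ler_pdivrMl // mulrC.
have TS' : T <= Num.sqrt W * Num.sqrt S.
  rewrite -sqrtrM // -(ger0_norm T0) -sqrtr_sqr.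
  by rewrite ler_sqrt // mulr_ge0.
apply: le_trans (ler_norm_sum _ _ _) _.
apply: le_trans _ (ler_wpM2l (sqrtr_ge0 nu) TS').
rewrite /T mulr_sumr; apply: ler_sum => i _.
rewrite normrM (ger0_norm (w0 i)).
apply: le_trans (ler_wpM2l (w0 i) (He i)) _.
by rewrite mulrCA.
Qed.
End Ineq.
Section Count.
Variable R : realType.

Lemma ballrv d (x y : 'rV[R]_d) e : ball x e y <-> (0 < e /\ forall j, `|x 0 j - y 0 j| < e).
Proof.
split.
  move=> [e0 H]; split => // j; have := H 0 j. by rewrite /ball /=.
move=> [e0 H]; split => // i j; rewrite /ball /= (ord1 i); exact: H.
Qed.

Lemma coord_le_enorm d (x : 'rV[R]_d) i : `|x 0 i| <= enorm x.
Proof.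
rewrite /enorm -sqrtr_sqr ler_sqrt; last by apply: sumr_ge0 => j _; exact: sqr_ge0.
by rewrite (bigD1 i) //= lerDl sumr_ge0 // => j _; exact: sqr_ge0.
Qed.

Lemma enorm_small d (x : 'rV[R]_d) r : 0 <= r -> (forall i, `|x 0 i| <= r) ->
  enorm x <= Num.sqrt (d%:R * r ^+ 2).
Proof.
move=> r0 H; rewrite /enorm ler_sqrt; last by apply: mulr_ge0 => //; exact: sqr_ge0.
have -> : d%:R * r ^+ 2 = \sum_(i < d) r ^+ 2 by rewrite sumr_const card_ord mulr_natl.
apply: ler_sum => i _; rewrite -[x 0 i ^+ 2]real_normK ?num_real //.
by have := H i; have := normr_ge0 (x 0 i); nra.
Qed.

Lemma M_bound d (Om : set 'rV[R]_d) B rho h M (T : 'I_M -> 'I_d.+1 -> 'rV[R]_d) :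
  (forall x, Om x -> enorm x <= B) -> 0 < rho -> 0 < h ->
  is_triangulation Om T -> quasi_uniform rho h T ->
  M%:R <= (6 * (`|B| + 1) * (d.+1)%:R / rho) ^+ d * h ^- d.
Proof.
move=> HB rho0 h0 [_ Hcov Hint _] Hq.
set B1 := `|B| + 1.
have B10 : 0 < B1 by rewrite /B1 ltr_pwDr // normr_ge0.
set r := rho * h / (d.+1)%:R.
have r0 : 0 < r by rewrite /r divr_gt0 // ?mulr_gt0 // ltr0n.
have [c Hc] := choice (fun K => (proj2 (Hq K))).
have cube : forall K (x : 'rV[R]_d), (forall i, `|x 0 i - c K 0 i| <= r) -> simplex_set (T K) x.
  move=> K x Hx; apply: Hc; apply: le_trans (@enorm_small d (x - c K) r (ltW r0) _) _.
    by move=> i; rewrite mxE [X in `|_ + X|]mxE.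
  rewrite -(ger0_norm (mulr_ge0 (ltW rho0) (ltW h0))) -sqrtr_sqr ler_sqrt ?sqr_ge0 //.
  rewrite /r expr_div_n mulrA ler_pdivrMr ?exprn_gt0 ?ltr0n //.
  rewrite [X in _ <= X]mulrC ler_pM2r ?exprn_gt0 ?mulr_gt0 //.
  rewrite -natrX ler_nat; nia.
have inter : forall K (y : 'rV[R]_d), ball (c K) r y -> interior (simplex_set (T K)) y.
  move=> K y By; rewrite /interior /=.
  have : nbhs y (ball (c K) r) by apply: open_nbhs_nbhs; split => //; exact: ball_open.
  apply: filterS => z /ballrv [_ Hz]; apply: cube => i.
  by rewrite distrC; apply: ltW.
have sep : forall K L, ball (c K) r (c L) -> K = L.
  move=> K L Hb; apply/eqP; apply/negPn/negP => KL.
  have := Hint K L KL; rewrite -subset0 => /(_ (c L)); apply.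
  split; first exact: inter.
  by apply: inter; exact: ballxx.
have bndc : forall z, closure Om z -> forall i, `|z 0 i| <= B1.
  move=> z Hz i; have [x [Ox Bx]] := Hz _ (nbhsx_ballx z 1 ltr01).
  move/ballrv : Bx => [_ /(_ i) Bx].
  have := @coord_le_enorm d x i; have := HB x Ox.
  have : `|z 0 i| <= `|z 0 i - x 0 i| + `|x 0 i|.
    by rewrite -[X in `|X| <= _](subrK (x 0 i)) ler_normD.
  have := ler_norm B; rewrite /B1; lra.
have inOm : forall K (x : 'rV[R]_d), (forall i, `|x 0 i - c K 0 i| <= r) -> closure Om x.
  by move=> K x Hx; rewrite -Hcov; exists K; exact: cube.
have cin : forall K, closure Om (c K).
  by move=> K; apply: (inOm K) => i; rewrite subrr normr0 ltW.
set A := B1 / r.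
have ri0 : 0 <= r^-1 by rewrite invr_ge0 ltW.
have A0 : 0 < A by rewrite divr_gt0.
have cA : forall K i, - A <= c K 0 i / r <= A.
  move=> K i; rewrite -ler_norml normrM (ger0_norm ri0).
  by rewrite /A ler_pM2r ?invr_gt0 // bndc.
set f0 := Num.floor (- A).
have fr : forall K i, f0 <= Num.floor (c K 0 i / r) <= Num.floor A.
  by move=> K i; have /andP[h1 h2] := cA K i; rewrite !le_floor.
set L := (`|Num.floor A - f0|%N).+1.
have bnd : forall K i, (`|Num.floor (c K ord0 i / r) - f0|%N < L)%N.
  move=> K i; rewrite ltnS; have /andP[h1 h2] := fr K i.
  rewrite -lez_nat !gez0_abs ?subr_ge0 //; last by apply: le_trans h2.
  by rewrite lerD2r.
pose idx K : {ffun 'I_d -> 'I_L} := [ffun i : 'I_d => inord `|Num.floor (c K ord0 i / r) - f0|%N].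
have inj : injective idx.
  move=> K1 K2 E; apply: sep; apply/ballrv; split => // j.
  have := congr1 (fun f : {ffun 'I_d -> 'I_L} => nat_of_ord (f j)) E; rewrite /= !ffunE !inordK ?bnd //.
  move=> /(congr1 Posz); rewrite !gez0_abs ?subr_ge0; last 2 first.
  - by have /andP[] := fr K2 j.
  - by have /andP[] := fr K1 j.
  move=> /addIr Ef.
  have h1 := floor_itv (c K1 0 j / r); have h2 := floor_itv (c K2 0 j / r).
  move: h1 h2; rewrite Ef !intrD /= => /andP[h1 h1'] /andP[h2 h2'].
  have : `|c K1 0 j / r - c K2 0 j / r| < 1 by rewrite ltr_norml; apply/andP; split; lra.
  by rewrite -mulrBl normrM (ger0_norm ri0) ltr_pdivrMr // mul1r.
have := leq_card idx inj; rewrite card_ffun !card_ord => HML.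
have ML : M%:R <= L%:R ^+ d :> R by rewrite -natrX ler_nat.
have LA : L%:R <= 2 * A + 2 :> R.
  rewrite /L -addn1 natrD natr_absz ger0_norm; last first.
    by rewrite subr_ge0 le_floor // (le_trans _ (ltW A0)) // oppr_le0 ltW.
  have := floor_le A; have := floorD1_gt (- A); rewrite intrD /= intrB; lra.
have [M0|Mpos] := posnP M.
  rewrite M0 mulr_ge0 // ?exprn_ge0 ?invr_ge0 ?exprn_ge0 // ?ltW //.
  by rewrite divr_gt0 ?mulr_gt0 // ltr0n.
pose K0 : 'I_M := Ordinal Mpos.
have -> : (6 * B1 * d.+1%:R / rho) ^+ d * h ^- d = (6 * A) ^+ d.
  rewrite -exprVn -exprMn; congr (_ ^+ _); rewrite /A /r; field.
  by rewrite !gt_eqF // ltr_pwDl // ler0n.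
apply: le_trans ML _.
have [d0|dpos] := posnP d; first by rewrite d0 !expr0.
pose i0 : 'I_d := Ordinal dpos.
have r2 : r <= 2 * B1.
  have y1 := bndc (c K0) (cin K0) i0.
  have hy : closure Om (c K0 + const_mx r).
    apply: (inOm K0) => i; rewrite !mxE.
    by rewrite addrAC subrr add0r gtr0_norm.
  have y2 := bndc _ hy i0.
  rewrite !mxE in y2.
  move: y1 y2; rewrite !ler_norml => /andP[y1 y1'] /andP[y2 y2']; lra.
have A1 : 1 <= 2 * A by rewrite /A mulrA ler_pdivlMr // mul1r.
apply: lerXn2r; rewrite ?nnegrE ?ler0n //; first by rewrite mulr_ge0 // ltW.
lra.
Qed.
End Count.

Theorem mainTheorem5 (R : realType) (d p : nat) (Om : set 'rV[R]_d)
    (Lam : 'rV[R]_p -> R) (F : 'rV[R]_(p + 1) -> R) (nu rho : R)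
    (beta : nat) (Cmin Cmax : R) :
  open Om -> connected Om -> ebounded Om ->
  convex_fun Lam -> continuous Lam ->
  self_concordant_barrier (epi_set Lam) F nu ->
  0 < Cmin < 1 -> 1 < Cmax -> 0 < rho ->
  exists nuh : R -> R,
    (exists C : R, forall h : R, 0 < h -> nuh h <= C * h ^- d) /\
    forall h : R, 0 < h ->
    forall (M : nat) (T : 'I_M -> 'I_d.+1 -> 'rV[R]_d)
           (xq : 'I_M -> 'I_beta -> 'rV[R]_d) (om : 'I_M -> 'I_beta -> R)
           (N : nat) (phi : 'I_N -> 'I_M -> 'rV[R]_d -> 'rV[R]_(p + 1)),
      is_triangulation Om T ->
      quasi_uniform rho h T ->
      (forall K k, simplex_set (T K) (xq K k)) ->
      (forall K k, Cmin * h ^+ d <= om K k <= Cmax * h ^+ d) ->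
      fe_space T phi ->
      (forall c, interior (Qh (epi_set Lam) phi xq) c ->
         forall K k, interior (epi_set Lam) (fe_eval phi c K (xq K k))) ->
      self_concordant_barrier (Qh (epi_set Lam) phi xq)
        (fun c => Cmin^-1 * h ^- d * Fh F phi xq om c) (nuh h).
Proof.
move=> _ _ [B HB] _ _ HF /andP[Cmin0 Cmin1] Cmax1 rho0.
set K0 := (6 * (`|B| + 1) * (d.+1)%:R / rho) ^+ d.
have K00 : 0 <= K0.
  by rewrite exprn_ge0 // divr_ge0 ?mulr_ge0 ?addr_ge0 // ltW.
set Cc := Num.max nu 0 * (Cmax / Cmin * beta%:R * K0).
exists (fun h => Cc * h ^- d); split; first by exists Cc.
move=> h h0 M T xq om N phi Htri Hq _ Hom _ Hint.
set a := Cmin^-1 * h ^- d.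
have hd0 : 0 < h ^+ d by rewrite exprn_gt0.
have a0 : 0 < a by rewrite mulr_gt0 ?invr_gt0.
have wge1 : forall K k, 1 <= a * om K k.
  move=> K k; have /andP[h1 _] := Hom K k.
  apply: le_trans (ler_wpM2l (ltW a0) h1).
  rewrite /a; have -> : Cmin^-1 / h ^+ d * (Cmin * h ^+ d) = 1.
    by field; rewrite !gt_eqF.
  by [].
have MB := @M_bound R d Om B rho h M T HB rho0 h0 Htri Hq.
have Wle : \sum_(q : 'I_M * 'I_beta) a * om q.1 q.2 <= Cmax / Cmin * beta%:R * K0 * h ^- d.
  apply: le_trans (_ : \sum_(q : 'I_M * 'I_beta) Cmax / Cmin <= _).
    apply: ler_sum => q _; have /andP[_ h2] := Hom q.1 q.2.
    apply: le_trans (ler_wpM2l (ltW a0) h2) _.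
    rewrite /a le_eqVlt; apply/orP; left; apply/eqP; field.
    by rewrite !gt_eqF.
  rewrite sumr_const card_prod !card_ord -[X in X <= _]mulr_natr natrM.
  have -> : Cmax / Cmin * (M%:R * beta%:R) = Cmax / Cmin * beta%:R * M%:R by ring.
  rewrite -[X in _ <= X]mulrA ler_wpM2l //.
  by rewrite mulr_ge0 // divr_ge0 // ltW // (lt_trans ltr01).
have lin : forall (c u : 'rV[R]_N) t K x,
    fe_eval phi (c + t *: u) K x = fe_eval phi c K x + t *: fe_eval phi u K x.
  move=> c u t K x; rewrite /fe_eval scaler_sumr -big_split /=.
  by apply: eq_bigr => j _; rewrite !mxE scalerDl scalerA.
move=> c u Hc.
pose z (q : 'I_M * 'I_beta) := fe_eval phi c q.1 (xq q.1 q.2).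
pose v (q : 'I_M * 'I_beta) := fe_eval phi u q.1 (xq q.1 q.2).
pose fs q := line_restr F (z q) (v q).
pose w (q : 'I_M * 'I_beta) := a * om q.1 q.2.
have Eg : forall t, line_restr (fun c => Cmin^-1 * h ^- d * Fh F phi xq om c) c u t
    = \sum_q w q * fs q t.
  move=> t; rewrite /line_restr /Fh -/a pair_bigA mulr_sumr /=.
  by apply: eq_bigr => q _; rewrite mulrA /w /fs /line_restr lin.
pose O := [set t : R | interior (Qh (epi_set Lam) phi xq) (c + t *: u)].
have oO : open O.
  apply: (@open_comp _ _ (fun t : R => c + t *: u)); last exact: open_interior.
  move=> t _.
  exact: (cvgD (cvg_cst c) (@scalel_continuous _ _ u t)).
have O0 : O 0 by rewrite /O /= scale0r addr0.
have intz : forall q t, O t -> interior (epi_set Lam) (z q + t *: v q).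
  by move=> q t Ot; have := Hint _ Ot q.1 q.2; rewrite lin.
have Dp : forall q t, O t -> [/\ derivable (fs q) t 1, derivable (derive1 (fs q)) t 1
    & derivable (derive1 (derive1 (fs q))) t 1].
  move=> q t Ot; have [[d1 d2 d3] _] := HF _ (v q) (intz q t Ot).
  have E : line_restr F (z q + t *: v q) (v q) = fun s => fs q (t + s).
    by apply/funext => s; rewrite /fs /line_restr scalerDl addrA.
  move: d1 d2 d3; rewrite E derive1nS derive1n1.
  rewrite (@derive1_shift R (fs q) t) (@derive1_shift R (derive1 (fs q)) t).
  move=> h1 h2 h3; split.
  - exact: (@derivable_shift R (fs q) t h1).
  - exact: (@derivable_shift R (derive1 (fs q)) t h2).
  - exact: (@derivable_shift R (derive1 (derive1 (fs q))) t h3).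
have Dp1 : forall q t, O t -> derivable (fs q) t 1 by move=> q t /(Dp q) [].
have Dp2 : forall q t, O t -> derivable (derive1 (fs q)) t 1 by move=> q t /(Dp q) [].
have Dp3 : forall q t, O t -> derivable (derive1 (derive1 (fs q))) t 1 by move=> q t /(Dp q) [].
move=> g.
have S1 := @sum_deriv R O _ w fs g oO (fun t _ => Eg t) Dp1.
have S2 := @sum_deriv R O _ w (fun q => derive1 (fs q)) (derive1 g) oO
  (fun t Ot => (S1 t Ot).2) Dp2.
have S3 := @sum_deriv R O _ w (fun q => derive1 (derive1 (fs q))) (derive1 (derive1 g)) oO
  (fun t Ot => (S2 t Ot).2) Dp3.
split; first by split; [exact: (S1 0 O0).1 | exact: (S2 0 O0).1 | exact: (S3 0 O0).1].
have e2 : derive1n 2 g = derive1 (derive1 g) by [].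
have e3 : derive1n 3 g = derive1 (derive1 (derive1 g)) by [].
rewrite e2 e3 (S1 0 O0).2 (S2 0 O0).2 (S3 0 O0).2.
have HFq : forall q, [/\ 0 <= derive1 (derive1 (fs q)) 0,
    `|derive1 (derive1 (derive1 (fs q))) 0| <= 2 * powR (derive1 (derive1 (fs q)) 0) (3%:R / 2%:R)
  & `|derive1 (fs q) 0| <= Num.sqrt nu * Num.sqrt (derive1 (derive1 (fs q)) 0)].
  move=> q; have := HF (z q) (v q) (Hint c Hc q.1 q.2).
  by move=> [_ H].
have w1 : forall q, 1 <= w q by move=> q; exact: wge1.
split.
- apply: sumr_ge0 => q _; apply: mulr_ge0; first exact: le_trans (w1 q).
  by case: (HFq q).
- apply: ineq2 => // q; by case: (HFq q).
- apply: le_trans (@ineq3 R _ w (fun q => derive1 (derive1 (fs q)) 0) (fun q => derive1 (fs q) 0) nu w1 _ _) _.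
  + by move=> q; case: (HFq q).
  + by move=> q; case: (HFq q).
  rewrite mulrA ler_wpM2r ?sqrtr_ge0 //.
  rewrite /Cc -mulrA sqrtrM; last by rewrite le_max lexx orbT.
  apply: ler_pM; rewrite ?sqrtr_ge0 //.
    by apply: ler_wsqrtr; rewrite le_max lexx.
  by apply: ler_wsqrtr; exact: Wle.
Qed.
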